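(* Let $c \ge 3$, let $H$ be a convex polygon in the plane with $c$ vertices, and let $T$ be a triangulation of $H$. Then every Sperner labelling of $T$ has a triangle of $T$ whose three vertices have three different labels.
   Context: A triangulation $T$ of $H$ is a subdivision of $H$ into finitely many triangles meeting face-to-face, whose vertex set contains the vertices of $H$. A Sperner labelling of $T$ is a function from the vertices of $T$ to $\{0,\dots,c-1\}$ such that the $c$ vertices of $H$ receive pairwise different labels, and every vertex of $T$ lying on the boundary of $H$ between two consecutive vertices $u,w$ of $H$ (on the edge $uw$) receives the label of $u$ or the label of $w$. *)

(* Defs.v *)
From HB Require Import structures.
From mathcomp Require Import all_boot all_order all_algebra.
Set Implicit Arguments. Unset Strict Implicit. Unset Printing Implicit Defensive.
Import Order.TTheory GRing.Theory Num.Theory.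
Local Open Scope ring_scope.

Section Defs.
Variable R : realFieldType.
Notation pt := 'rV[R]_2.

Definition in_conv (s : seq pt) (x : pt) : Prop :=
  exists w : 'I_(size s) -> R,
    (forall i, 0 <= w i) /\ \sum_i w i = 1 /\ x = \sum_i w i *: s`_i.

Definition orient (a b p : pt) : R :=
  (b 0 0 - a 0 0) * (p 0 1 - a 0 1) - (b 0 1 - a 0 1) * (p 0 0 - a 0 0).

(* v : 'I_c -> pt lists the vertices of a convex polygon in cyclic order:
   for every edge v i v (i+1), all other vertices lie strictly on one
   common side of the line through this edge. *)
Definition convex_polygon (c : nat) (v : 'I_c -> pt) : Prop :=
  forall i j k : 'I_c,
    j != i -> j != ordS i -> k != i -> k != ordS i ->
    0 < orient (v i) (v (ordS i)) (v j) * orient (v i) (v (ordS i)) (v k).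

Definition polygon_pts (c : nat) (v : 'I_c -> pt) (x : pt) : Prop :=
  in_conv [seq v i | i <- enum 'I_c] x.

Definition triangle := (pt * pt * pt)%type.
Definition tri_vs (t : triangle) : seq pt := [:: t.1.1; t.1.2; t.2].
Definition nondegenerate (t : triangle) : Prop := orient t.1.1 t.1.2 t.2 != 0.

Definition tvertex (T : seq triangle) (x : pt) : Prop :=
  exists2 t, t \in T & x \in tri_vs t.

(* T is a triangulation of the convex polygon with vertex list v:
   finitely many nondegenerate triangles whose union is H, meeting
   face-to-face (the intersection of two triangles is the convex hull of
   their common vertices, i.e. empty, a common vertex, a common edge or the
   whole triangle), and whose vertex set contains the vertices of H. *)
Definition triangulation (c : nat) (v : 'I_c -> pt) (T : seq triangle) : Prop :=
  [/\ forall t, t \in T -> nondegenerate t,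
      forall x, polygon_pts v x <-> exists2 t, t \in T & in_conv (tri_vs t) x,
      forall t1 t2, t1 \in T -> t2 \in T -> forall x,
        (in_conv (tri_vs t1) x /\ in_conv (tri_vs t2) x) <->
        in_conv [seq p <- tri_vs t1 | p \in tri_vs t2] x
    & forall i, tvertex T (v i)].

(* Sperner labelling with labels {0,...,c-1} (only its values on vertices of
   T matter). *)
Definition sperner_labelling (c : nat) (v : 'I_c -> pt) (T : seq triangle)
    (lab : pt -> 'I_c) : Prop :=
  (forall i j : 'I_c, lab (v i) = lab (v j) -> i = j) /\
  (forall x, tvertex T x -> forall i : 'I_c,
     in_conv [:: v i; v (ordS i)] x ->
     lab x = lab (v i) \/ lab x = lab (v (ordS i))).

End Defs.

(* Main.v *)
From Pilot Require Import Defs.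
From HB Require Import structures.
From mathcomp Require Import all_boot all_order all_algebra.
From mathcomp Require Import ring lra zify.
From Stdlib Require Import Classical ClassicalEpsilon.
Import Order.TTheory GRing.Theory Num.Theory.
Local Open Scope ring_scope.

Module Aux.
Import Pilot.Defs.
Set Implicit Arguments. Unset Strict Implicit. Unset Printing Implicit Defensive.


Section Geo.
Variable R : realFieldType.
Notation pt := 'rV[R]_2.

Lemma ord2 (j : 'I_2) : j = 0 \/ j = 1.
Proof. case: j => [[|[|//]] ?]; [left|right]; exact: val_inj. Qed.

Lemma ptP (p q : pt) : p 0 0 = q 0 0 -> p 0 1 = q 0 1 -> p = q.
Proof. move=> h0 h1; apply/rowP => j; case: (ord2 j) => ->; by []. Qed.

Lemma orient_cyc (a b c : pt) : orient a b c = orient b c a.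
Proof. rewrite /orient; ring. Qed.

Lemma orient_swap (a b c : pt) : orient b a c = - orient a b c.
Proof. rewrite /orient; ring. Qed.

Lemma orient_aab (a b : pt) : orient a a b = 0.
Proof. rewrite /orient; ring. Qed.
Lemma orient_aba (a b : pt) : orient a b a = 0.
Proof. rewrite /orient; ring. Qed.
Lemma orient_abb (a b : pt) : orient a b b = 0.
Proof. rewrite /orient; ring. Qed.

Lemma orient_lerp (a b p q : pt) (s : R) :
  orient a b ((1 - s) *: p + s *: q) = (1 - s) * orient a b p + s * orient a b q.
Proof. rewrite /orient !mxE; ring. Qed.

Lemma orient3 (a b p q r : pt) (x y z : R) : x + y + z = 1 ->
  orient a b (x *: p + y *: q + z *: r) = x * orient a b p + y * orient a b q + z * orient a b r.
Proof. move=> h; have -> : x = 1 - y - z by lra. rewrite /orient !mxE; ring. Qed.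

Lemma orient_mid2 (a b p : pt) (s : R) :
  orient a ((1 - s) *: a + s *: b) p = s * orient a b p.
Proof. rewrite /orient !mxE; ring. Qed.

Lemma orient_sum (I : finType) (w : I -> R) (P : I -> pt) (a b : pt) :
  \sum_i w i = 1 ->
  orient a b (\sum_i w i *: P i) = \sum_i w i * orient a b (P i).
Proof.
move=> hw.
have e0 : (\sum_i w i *: P i) 0 0 = \sum_i w i * P i 0 0.
  by rewrite summxE; apply: eq_bigr => i _; rewrite mxE.
have e1 : (\sum_i w i *: P i) 0 1 = \sum_i w i * P i 0 1.
  by rewrite summxE; apply: eq_bigr => i _; rewrite mxE.
rewrite /orient e0 e1.
transitivity (\sum_i ((b 0 0 - a 0 0) * (w i * P i 0 1) - ((b 0 0 - a 0 0) * a 0 1) * w i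
   - ((b 0 1 - a 0 1) * (w i * P i 0 0)) + ((b 0 1 - a 0 1) * a 0 0) * w i)); last first.
  by apply: eq_bigr => i _; rewrite /orient; ring.
rewrite !big_split /= !sumrN -!mulr_sumr hw; ring.
Qed.

Definition conv3 (a b c x : pt) := exists al be ga : R,
  [/\ 0 <= al, 0 <= be, 0 <= ga, al + be + ga = 1 & x = al *: a + be *: b + ga *: c].

Lemma in_conv3 (a b c x : pt) : in_conv [:: a; b; c] x <-> conv3 a b c x.
Proof.
rewrite /in_conv /=; split.
  case=> w [w0 [w1 ->]]; move: w1; rewrite !big_ord_recl big_ord0 /= !addr0 => w1.
  exists (w ord0), (w (lift ord0 ord0)), (w (lift ord0 (lift ord0 ord0))).
  split => //; first by rewrite -addrA.
  by rewrite big_ord0 addr0 !addrA.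
case=> al [be [ga [h0 h1 h2 h3 ->]]].
exists (fun i : 'I_3 => [:: al; be; ga]`_i); split.
  by move=> i; case: i => [[|[|[|//]]] ?] /=.
split; first by rewrite !big_ord_recl big_ord0 /= addr0 addrA.
by rewrite !big_ord_recl !big_ord0 /= addr0 !addrA.
Qed.

Lemma in_conv2 (a b x : pt) :
  in_conv [:: a; b] x <-> exists s : R, [/\ 0 <= s, s <= 1 & x = (1 - s) *: a + s *: b].
Proof.
rewrite /in_conv /=; split.
  case=> w [w0 [w1 ->]]; move: w1; rewrite !big_ord_recl !big_ord0 /= !addr0 => w1.
  exists (w (lift ord0 ord0)); split => //.
    by have := w0 ord0; lra.
  by congr (_ *: _ + _); lra.
case=> s [h0 h1 ->].
exists (fun i : 'I_2 => [:: 1 - s; s]`_i); split.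
  by move=> i; case: i => [[|[|//]] ?] /=; lra.
split; first by rewrite !big_ord_recl big_ord0 /= addr0; lra.
by rewrite !big_ord_recl !big_ord0 /= addr0.
Qed.

Lemma cramer (a b c x : pt) :
  orient a b c *: x = orient b c x *: a + orient c a x *: b + orient a b x *: c.
Proof. apply: ptP; rewrite /orient !mxE; ring. Qed.

Lemma cramer_sum (a b c x : pt) :
  orient b c x + orient c a x + orient a b x = orient a b c.
Proof. rewrite /orient; ring. Qed.

Lemma bary_in (a b c x : pt) : orient a b c != 0 ->
  0 <= orient b c x / orient a b c -> 0 <= orient c a x / orient a b c ->
  0 <= orient a b x / orient a b c -> conv3 a b c x.
Proof.
move=> o0 h1 h2 h3.
exists (orient b c x / orient a b c), (orient c a x / orient a b c),
  (orient a b x / orient a b c); split => //.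
  by rewrite -!mulrDl cramer_sum mulfV.
apply: (scalerI o0).
rewrite !scalerDr !scalerA !(mulrC (orient a b c)) !mulfVK // ; last first.
by rewrite cramer.
Qed.

Lemma conv3_orient (a b c x : pt) (al be ga : R) : al + be + ga = 1 ->
  x = al *: a + be *: b + ga *: c ->
  [/\ orient b c x = al * orient a b c, orient c a x = be * orient a b c
    & orient a b x = ga * orient a b c].
Proof.
move=> h ->; rewrite !orient3 // ?orient_aab ?orient_aba ?orient_abb; split.
- by rewrite (orient_cyc a b c); ring.
- by rewrite (orient_cyc c a b); ring.
- by ring.
Qed.

Lemma conv3_rot (a b c x : pt) : conv3 a b c x -> conv3 b c a x.
Proof.
case=> al [be [ga [h0 h1 h2 h3 ->]]]; exists be, ga, al; split => //; first lra.
by rewrite [RHS]addrC addrA.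
Qed.

Lemma sum_ge0_eq0 (I : finType) (F : I -> R) :
  (forall i, 0 <= F i) -> \sum_i F i = 0 -> forall i, F i = 0.
Proof. by move=> h0 h i; move/psumr_eq0P: h => /(_ (fun j _ => h0 j)) ->. Qed.

Lemma sum_gt0_ex (I : finType) (F : I -> R) : 0 < \sum_i F i -> exists i, 0 < F i.
Proof.
move=> h; apply: NNPP => hn.
have : \sum_i F i <= 0.
  apply: sumr_le0 => i _; rewrite leNgt; apply/negP => hi; apply: hn; by exists i.
by rewrite leNgt h.
Qed.

Lemma conv_orient (s : seq pt) x a b : in_conv s x ->
  exists w : 'I_(size s) -> R, [/\ forall i, 0 <= w i, \sum_i w i = 1
    & orient a b x = \sum_i w i * orient a b s`_i].
Proof. by case=> w [w0 [w1 ->]]; exists w; split => //; rewrite orient_sum. Qed.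

Lemma conv_ge0 (s : seq pt) x a b k : in_conv s x ->
  (forall p, p \in s -> 0 <= k * orient a b p) -> 0 <= k * orient a b x.
Proof.
case/(conv_orient a b) => w [w0 w1 ->] h; rewrite mulr_sumr; apply: sumr_ge0 => i _.
by rewrite mulrCA; apply: mulr_ge0 => //; apply: h; rewrite mem_nth.
Qed.

Lemma conv_eq0 (s : seq pt) x a b : in_conv s x ->
  (forall p, p \in s -> orient a b p = 0) -> orient a b x = 0.
Proof.
case/(conv_orient a b) => w [w0 w1 ->] h; apply: big1 => i _.
by rewrite h ?mulr0 // mem_nth.
Qed.

Lemma conv_lt_ex (s : seq pt) x a b k : in_conv s x -> k * orient a b x < 0 ->
  exists2 p, p \in s & k * orient a b p < 0.
Proof.
move=> hc hx; apply: NNPP => hn.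
have : 0 <= k * orient a b x.
  apply: (conv_ge0 hc) => p hp; rewrite leNgt; apply/negP => hlt; apply: hn; by exists p.
by rewrite leNgt hx.
Qed.

Lemma conv_zero_pos (s : seq pt) x a b c d k1 k2 : in_conv s x ->
  (forall p, p \in s -> 0 <= k1 * orient a b p) -> k1 * orient a b x = 0 ->
  0 < k2 * orient c d x ->
  exists2 p, p \in s & k1 * orient a b p = 0 /\ 0 < k2 * orient c d p.
Proof.
move=> hc h1 hx1 hx2; case: (hc) => w [w0 [w1 hx]].
have E (k : R) (a' b' : pt) : k * orient a' b' x = \sum_i w i * (k * orient a' b' s`_i).
  by rewrite hx orient_sum // mulr_sumr; apply: eq_bigr => i _; rewrite mulrCA.
have z := sum_ge0_eq0 (fun i => mulr_ge0 (w0 i) (h1 _ (mem_nth 0 (ltn_ord i)))).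
rewrite E in hx1; have {}z := z hx1.
rewrite E in hx2; case: (sum_gt0_ex hx2) => i hi.
have wi : 0 < w i.
  rewrite lt_def w0 andbT; apply/eqP => e; by rewrite e mul0r ltxx in hi.
exists s`_i; first by rewrite mem_nth.
split; last by rewrite pmulr_rgt0 in hi.
by have := z i; move/eqP; rewrite mulf_eq0 (gt_eqF wi) /= => /eqP.
Qed.

Lemma conv_two_zero (s : seq pt) x a b c d k1 k2 : in_conv s x ->
  (forall p, p \in s -> 0 <= k1 * orient a b p) -> k1 * orient a b x = 0 ->
  (forall p, p \in s -> 0 <= k2 * orient c d p) -> k2 * orient c d x = 0 ->
  exists2 p, p \in s & k1 * orient a b p = 0 /\ k2 * orient c d p = 0.
Proof.
move=> hc h1 hx1 h2 hx2; case: (hc) => w [w0 [w1 hx]].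
have E (k : R) (a' b' : pt) : k * orient a' b' x = \sum_i w i * (k * orient a' b' s`_i).
  by rewrite hx orient_sum // mulr_sumr; apply: eq_bigr => i _; rewrite mulrCA.
have z1 := sum_ge0_eq0 (fun i => mulr_ge0 (w0 i) (h1 _ (mem_nth 0 (ltn_ord i)))).
have z2 := sum_ge0_eq0 (fun i => mulr_ge0 (w0 i) (h2 _ (mem_nth 0 (ltn_ord i)))).
rewrite E in hx1; rewrite E in hx2; have {}z1 := z1 hx1; have {}z2 := z2 hx2.
have : 0 < \sum_i w i by rewrite w1 ltr01.
case/sum_gt0_ex => i wi.
exists s`_i; first by rewrite mem_nth.
split.
  by have := z1 i; move/eqP; rewrite mulf_eq0 (gt_eqF wi) /= => /eqP.
by have := z2 i; move/eqP; rewrite mulf_eq0 (gt_eqF wi) /= => /eqP.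
Qed.

Lemma conv3_coords (a b c x : pt) : orient a b c != 0 -> conv3 a b c x ->
  [/\ 0 <= orient b c x / orient a b c, 0 <= orient c a x / orient a b c
    & 0 <= orient a b x / orient a b c].
Proof.
move=> o0 [al [be [ga [h0 h1 h2 h3 hx]]]]; case: (conv3_orient h3 hx) => -> -> ->.
by rewrite !mulfK.
Qed.

Definition ev (P : R -> Prop) := exists2 d, 0 < d & forall e, 0 < e -> e < d -> P e.

Lemma ev_and P Q : ev P -> ev Q -> ev (fun e => P e /\ Q e).
Proof.
case=> d1 d10 h1 [d2 d20 h2]; exists (Num.min d1 d2); first by rewrite lt_min d10.
by move=> e e0; rewrite lt_min => /andP[e1 e2]; split; [exact: h1|exact: h2].
Qed.

Lemma ev_impl (P Q : R -> Prop) : (forall e, P e -> Q e) -> ev P -> ev Q.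
Proof. by move=> h [d d0 hd]; exists d => // e e0 ed; apply: h; apply: hd. Qed.

Lemma ev_all (T : eqType) (s : seq T) (P : T -> R -> Prop) :
  (forall t, t \in s -> ev (P t)) -> ev (fun e => forall t, t \in s -> P t e).
Proof.
elim: s => [|t s IH] h.
  by exists 1 => //; rewrite ltr01.
have := ev_and (h t (mem_head t s)) (IH (fun u hu => h u (@mem_behead _ (t :: s) u hu))).
apply: ev_impl => e [h1 h2] u; rewrite in_cons => /orP[/eqP->//|]; exact: h2.
Qed.

Lemma ev_ex P : ev P -> exists2 e, 0 < e & P e.
Proof.
case=> d d0 h; exists (d / 2); first by rewrite divr_gt0 // ltr0n.
by apply: h; [rewrite divr_gt0 // ltr0n | lra].
Qed.

Lemma ev_lt1 : ev (fun e => e < 1).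
Proof. by exists 1; [rewrite ltr01 | move=> e _]. Qed.

Lemma ev_lin_pos (a b : R) : 0 < a -> ev (fun e => 0 < (1 - e) * a + e * b).
Proof.
move=> a0; set u := `|b - a|.
have u0 : 0 <= u by exact: normr_ge0.
have hu : - u <= b - a by rewrite lerNl /u -normrN; exact: ler_norm.
exists (a / (u + 1)); first by rewrite divr_gt0 // ltr_wpDl.
move=> e e0 ed; have : e * (u + 1) < a by rewrite -ltr_pdivlMr // ltr_wpDl.
nra.
Qed.

Lemma ev_lin_neg (a b : R) : a < 0 -> ev (fun e => (1 - e) * a + e * b < 0).
Proof.
move=> a0; have := @ev_lin_pos (- a) (- b); rewrite oppr_gt0 => /(_ a0).
by apply: ev_impl => e; lra.
Qed.

Lemma ev_notin (a b c m q : pt) : orient a b c != 0 -> ~ conv3 a b c m ->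
  ev (fun e => ~ conv3 a b c ((1 - e) *: m + e *: q)).
Proof.
move=> o0 hm.
have hn : ~ [/\ 0 <= orient b c m / orient a b c, 0 <= orient c a m / orient a b c
    & 0 <= orient a b m / orient a b c].
  by case=> h1 h2 h3; apply: hm; apply: bary_in.
set o := orient a b c.
have L (a' b' : pt) : forall e, orient a' b' ((1 - e) *: m + e *: q) / o =
    (1 - e) * (orient a' b' m / o) + e * (orient a' b' q / o).
  by move=> e; rewrite orient_lerp mulrDl !mulrA.
have G (a' b' : pt) : orient a' b' m / o < 0 ->
   ev (fun e => orient a' b' ((1 - e) *: m + e *: q) / o < 0).
  move=> h; have := ev_lin_neg (orient a' b' q / o) h.
  by apply: ev_impl => e; rewrite L.
case: (lerP 0 (orient b c m / o)) => h1; last first.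
  move: (G _ _ h1); apply: ev_impl => e he hc; case: (conv3_coords o0 hc) => h _ _.
  by rewrite -/o leNgt he in h.
case: (lerP 0 (orient c a m / o)) => h2; last first.
  move: (G _ _ h2); apply: ev_impl => e he hc; case: (conv3_coords o0 hc) => _ h _.
  by rewrite -/o leNgt he in h.
case: (lerP 0 (orient a b m / o)) => h3; last first.
  move: (G _ _ h3); apply: ev_impl => e he hc; case: (conv3_coords o0 hc) => _ _ h.
  by rewrite -/o leNgt he in h.
by case: hn; split.
Qed.

Lemma sum_cast (V : nmodType) (m k : nat) (e : m = k) (F : 'I_m -> V) :
  \sum_(i < m) F i = \sum_(j < k) F (cast_ord (esym e) j).
Proof. by case: k / e; apply: eq_bigr => i _; rewrite cast_ord_id. Qed.

Lemma polyP (c : nat) (v : 'I_c -> pt) x : polygon_pts v x <->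
  exists w : 'I_c -> R, [/\ forall i, 0 <= w i, \sum_i w i = 1 & x = \sum_i w i *: v i].
Proof.
rewrite /polygon_pts /in_conv.
have e : size [seq v i | i <- enum 'I_c] = c by rewrite size_map size_enum_ord.
have hn (k : 'I_c) : [seq v i | i <- enum 'I_c]`_(cast_ord (esym e) k) = v k.
  rewrite /= (nth_map k) ?size_enum_ord //.
  by congr v; apply: val_inj => /=; rewrite nth_enum_ord.
split.
  case=> w [w0 [w1 ->]]; exists (fun i => w (cast_ord (esym e) i)); split => //.
    by rewrite -w1 (sum_cast e).
  by rewrite (sum_cast e); apply: eq_bigr => i _; rewrite hn.
case=> w [w0 w1 ->]; exists (fun j => w (cast_ord e j)); split => //.
split; first by rewrite (sum_cast e) -w1; apply: eq_bigr => i _; rewrite cast_ordKV.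
rewrite (sum_cast e); apply: eq_bigr => i _; rewrite cast_ordKV hn //.
Qed.
End Geo.


Lemma val_ordS m (j : 'I_m) : nat_of_ord (ordS j) = if j.+1 == m then 0%N else j.+1.
Proof. rewrite /=; case: eqP => [->|h]; first exact: modnn.
apply: modn_small; have := ltn_ord j; lia. Qed.
Ltac ordS_lia := rewrite ?val_ordS; repeat match goal with |- context [if ?x == ?y then _ else _] => case: (x =P y) end; intros; lia.
Ltac neq_tac i := apply/eqP => /(congr1 (@nat_of_ord _)); have := ltn_ord i; ordS_lia.

Lemma sg_pos (R : realFieldType) (x : R) : x != 0 -> 0 < Num.sg x * x.
Proof.
move=> x0; case: (ltrgtP x 0) => h.
- by rewrite ltr0_sg //; lra.
- by rewrite gtr0_sg // mul1r.
- by rewrite h eqxx in x0.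
Qed.

Lemma sg_sq (R : realFieldType) (x : R) : x != 0 -> Num.sg x * Num.sg x = 1.
Proof.
move=> x0; case: (ltrgtP x 0) => h.
- by rewrite ltr0_sg //; lra.
- by rewrite gtr0_sg // mul1r.
- by rewrite h eqxx in x0.
Qed.

Lemma sg_eq_of_pos (R : realFieldType) (x y : R) : 0 < x * y -> Num.sg x = Num.sg y.
Proof.
move=> h; case: (ltrgtP x 0) => hx; case: (ltrgtP y 0) => hy.
all: try by rewrite ?ltr0_sg ?gtr0_sg.
all: try (rewrite ?hx ?hy in h; by rewrite ?mul0r ?mulr0 ltxx in h).
all: try (exfalso; nra).
by rewrite !gtr0_sg.
Qed.

Section Poly.
Variable R : realFieldType.
Notation pt := 'rV[R]_2.
Variable n : nat.
Notation c := n.+3.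
Variable v : 'I_c -> pt.
Hypothesis hconv : convex_polygon v.

Definition i0 : 'I_c := ord0.
Definition i1 : 'I_c := ordS i0.
Definition i2 : 'I_c := ordS i1.

Definition oi (i : 'I_c) (p : pt) := orient (v i) (v (ordS i)) p.
Definition seg (i : 'I_c) (p : pt) := in_conv [:: v i; v (ordS i)] p.

Lemma ordS_neq (j : 'I_c) : ordS j != j.
Proof. apply/eqP => /(congr1 (@nat_of_ord _)); have := ltn_ord j; ordS_lia. Qed.
Lemma ordSS_neq (j : 'I_c) : ordS (ordS j) != j.
Proof. apply/eqP => /(congr1 (@nat_of_ord _)); have := ltn_ord j; ordS_lia. Qed.

Definition sig_ (i : 'I_c) := Num.sg (oi i (v (ordS (ordS i)))).
Definition sgm := sig_ i0.

Lemma oi_pair (i j k : 'I_c) : j != i -> j != ordS i -> k != i -> k != ordS i ->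
  Num.sg (oi i (v j)) = Num.sg (oi i (v k)).
Proof. by move=> *; apply: sg_eq_of_pos; apply: hconv. Qed.

Lemma sig_succ i : sig_ (ordS i) = sig_ i.
Proof.
rewrite /sig_ /oi.
have -> : orient (v i) (v (ordS i)) (v (ordS (ordS i))) =
          orient (v (ordS i)) (v (ordS (ordS i))) (v i) by rewrite orient_cyc.
apply: (oi_pair (i := ordS i)); neq_tac i.
Qed.

Lemma sig_all i : sig_ i = sgm.
Proof.
suff : forall k (i : 'I_c), nat_of_ord i = k -> sig_ i = sgm by apply.
elim=> [|k IH] j hj.
  by congr sig_; apply: val_inj.
have hk : (k < c)%N by have := ltn_ord j; lia.
have -> : j = ordS (Ordinal hk).
  apply/eqP; rewrite -(inj_eq val_inj) /=; apply/eqP.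
  rewrite modn_small; first by rewrite hj.
  by have := ltn_ord j; lia.
by rewrite sig_succ IH.
Qed.

Lemma side (i j : 'I_c) : j != i -> j != ordS i -> 0 < sgm * oi i (v j).
Proof.
move=> h1 h2; rewrite -(sig_all i) /sig_.
rewrite (oi_pair (ordSS_neq i) _ h1 h2); last first.
  by rewrite (inj_eq (@ordS_inj _)) ordS_neq.
apply: sg_pos; apply/eqP => e.
by have := hconv h1 h2 h1 h2; rewrite -/(oi i (v j)) e mul0r ltxx.
Qed.

Lemma sig_sq : sgm * sgm = 1.
Proof.
have h : 0 < sgm * oi i0 (v i2) by apply: side; rewrite /i2 /i1; neq_tac i0.
rewrite /sgm /sig_; apply: sg_sq; apply/eqP => e.
by move: h; rewrite /i2 /i1 e mulr0 ltxx.
Qed.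

Lemma oi_vi i : oi i (v i) = 0.
Proof. by rewrite /oi orient_aba. Qed.
Lemma oi_viS i : oi i (v (ordS i)) = 0.
Proof. by rewrite /oi orient_abb. Qed.

Lemma side_ge0 i j : 0 <= sgm * oi i (v j).
Proof.
case: (eqVneq j i) => [->|h1]; first by rewrite oi_vi mulr0.
case: (eqVneq j (ordS i)) => [->|h2]; first by rewrite oi_viS mulr0.
exact/ltW/side.
Qed.

Lemma inH_half x i : polygon_pts v x -> 0 <= sgm * oi i x.
Proof.
case/polyP => w [w0 w1 ->]; rewrite /oi orient_sum // mulr_sumr.
apply: sumr_ge0 => j _; rewrite mulrCA; exact: mulr_ge0 (w0 j) (side_ge0 i j).
Qed.


Lemma sum_two (V : nmodType) (i : 'I_c) (F : 'I_c -> V) :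
  (forall j, j != i -> j != ordS i -> F j = 0) -> \sum_j F j = F i + F (ordS i).
Proof.
move=> h; rewrite (bigD1 i) //= (bigD1 (ordS i)) /=; last by rewrite ordS_neq.
rewrite big1 ?addr0 // => j /andP[h1 h2]; exact: h.
Qed.

Lemma line_seg x i : polygon_pts v x -> oi i x = 0 -> seg i x.
Proof.
case/polyP => w [w0 w1 hx] h0.
have E : sgm * oi i x = \sum_j w j * (sgm * oi i (v j)).
  by rewrite hx /oi orient_sum // mulr_sumr; apply: eq_bigr => j _; rewrite mulrCA.
rewrite h0 mulr0 in E.
have z := sum_ge0_eq0 (fun j => mulr_ge0 (w0 j) (side_ge0 i j)) (esym E).
have wz j : j != i -> j != ordS i -> w j = 0.
  move=> h1 h2; have := z j; move/eqP; rewrite mulf_eq0 => /orP[/eqP//|].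
  by rewrite (gt_eqF (side h1 h2)).
rewrite (sum_two wz) in w1.
rewrite (@sum_two _ i (fun j => w j *: v j)) in hx; last first.
  by move=> j h1 h2; rewrite wz // scale0r.
apply/in_conv2; exists (w (ordS i)); split => //.
  by have := w0 i; lra.
by rewrite hx; congr (_ *: _ + _); lra.
Qed.

Lemma ind_sum (V : lmodType R) (a : 'I_c) (al : R) (p : 'I_c -> V) :
  \sum_j ((j == a)%:R * al) *: p j = al *: p a.
Proof.
rewrite (bigD1 a) //= eqxx mul1r big1 ?addr0 // => j /negPf ->.
by rewrite mul0r scale0r.
Qed.

Lemma ind_sumR (a : 'I_c) (al : R) : \sum_(j : 'I_c) (j == a)%:R * al = al.
Proof.
rewrite (bigD1 a) //= eqxx mul1r big1 ?addr0 // => j /negPf ->.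
by rewrite mul0r.
Qed.

Lemma conv3_poly a b d x : conv3 (v a) (v b) (v d) x -> polygon_pts v x.
Proof.
case=> al [be [ga [h0 h1 h2 h3 ->]]]; apply/polyP.
exists (fun j => (j == a)%:R * al + (j == b)%:R * be + (j == d)%:R * ga); split.
- by move=> j; rewrite !addr_ge0 // mulr_ge0 // ler0n.
- by rewrite !big_split /= !ind_sumR.
- under eq_bigr do rewrite !scalerDl.
  by rewrite !big_split /= !ind_sum.
Qed.

Lemma seg_param i p : seg i p ->
  exists s : R, [/\ 0 <= s, s <= 1 & p = (1 - s) *: v i + s *: v (ordS i)].
Proof. by move/in_conv2. Qed.

Lemma seg_oi i p : seg i p -> oi i p = 0.
Proof.
case/seg_param => s [_ _ ->]; rewrite /oi orient_lerp orient_aba orient_abb; ring.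
Qed.

Lemma seg_H i p : seg i p -> polygon_pts v p.
Proof.
case/seg_param => s [s0 s1 ->]; apply: (conv3_poly (a := i) (b := ordS i) (d := i)).
exists (1 - s), s, 0; split; [lra|done|done|lra|by rewrite scale0r addr0].
Qed.

Lemma i2_nin : (i2 != i0) && (i2 != ordS i0).
Proof. by apply/andP; split; rewrite /i2 /i1; neq_tac i0. Qed.

Lemma seg01 p : seg i0 p -> seg i1 p -> p = v i1.
Proof.
move=> h0 /seg_param [s [s0 s1 hp]].
have e := seg_oi h0; rewrite hp /oi orient_lerp -/i1 orient_abb mulr0 add0r in e.
move/eqP: e; rewrite mulf_eq0 => /orP[/eqP s00|].
  by rewrite hp s00 subr0 scale1r scale0r addr0.
case/andP: i2_nin => a1 a2.
move/eqP => e; have h := side a1 a2; move: h; rewrite /oi.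
by change (ordS i0) with i1; change i2 with (ordS i1); rewrite e mulr0 ltxx.
Qed.

Lemma seg_v1 i : i != i0 -> i != i1 -> ~ seg i (v i1).
Proof.
move=> h1 h2 hs; have := seg_oi hs.
have a1 : i1 != i by rewrite eq_sym.
have a2 : i1 != ordS i by rewrite /i1 (inj_eq (@ordS_inj _)) eq_sym.
by have := side a1 a2 => h e; rewrite e mulr0 ltxx in h.
Qed.


Lemma div_sig X o : 0 <= sgm * X -> 0 < sgm * o -> 0 <= X / o.
Proof.
move=> h1 h2.
have s0 : sgm != 0 by apply/eqP => e; have := sig_sq; rewrite e mulr0 => /eqP; rewrite eq_sym oner_eq0.
have o0 : o != 0 by apply/eqP => e; rewrite e mulr0 ltxx in h2.
have -> : X / o = (sgm * X) / (sgm * o).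
  by rewrite invfM mulrACA mulfV // mul1r.
by apply: divr_ge0 => //; apply: ltW.
Qed.

Lemma ordS_inord k : (k < n.+2)%N -> ordS (inord k : 'I_c) = inord k.+1.
Proof.
move=> hk; apply: val_inj; rewrite /= inordK ?inordK //; try lia.
by rewrite modn_small //; lia.
Qed.

Lemma ordS_last : ordS (inord n.+2 : 'I_c) = i0.
Proof. by apply: val_inj; rewrite /= inordK // modnn. Qed.

Lemma fan x : (forall i, 0 <= sgm * oi i x) -> polygon_pts v x.
Proof.
move=> hx.
pose V k := v (inord k).
pose W k := sgm * orient (v i0) (V k) x.
have W1 : 0 <= W 1%N.
  rewrite /W /V; have -> : (inord 1 : 'I_c) = i1 by apply: val_inj; rewrite /= inordK // modn_small.
  exact: (hx i0).
have Wl : W n.+2 <= 0.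
  have := hx (inord n.+2); rewrite /oi ordS_last /W orient_swap; lra.
have exP : exists k, (1 < k)%N && (W k <= 0) by exists n.+2; rewrite Wl andbT.
case: (ex_minnP exP) => j /andP[hj1 hj2] hmin.
have jle : (j <= n.+2)%N by apply: hmin; rewrite Wl andbT.
have [i hij] : exists i, j = i.+1 by exists j.-1; lia.
have Wi : 0 <= W i.
  case: (ltngtP i 1%N) => hi.
  - lia.
  - rewrite leNgt; apply/negP => hlt.
    have := hmin i; rewrite hi ltW // => /(_ isT); lia.
  - by rewrite hi.
set a : 'I_c := inord i.
have hSa : ordS a = inord j by rewrite /a ordS_inord ?hij //; lia.
have ha : nat_of_ord a = i by rewrite /a inordK //; lia.
have hb : nat_of_ord (inord j : 'I_c) = j by rewrite inordK //; lia.
have so : 0 < sgm * orient (v i0) (V i) (V j).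
  rewrite /V orient_cyc -/a -hSa; apply: side.
  - by apply/eqP => /(congr1 (@nat_of_ord _)); rewrite ha /=; lia.
  - by rewrite hSa; apply/eqP => /(congr1 (@nat_of_ord _)); rewrite hb /=; lia.
apply: (conv3_poly (a := i0) (b := a) (d := inord j)).
apply: bary_in.
- by apply/eqP => e; rewrite e mulr0 ltxx in so.
- apply: div_sig so; have := hx a; by rewrite /oi hSa.
- apply: div_sig so; rewrite /V orient_swap; move: hj2; rewrite /W /V; lra.
- by apply: div_sig so.
Qed.

End Poly.


Section Tri.
Variable R : realFieldType.
Notation pt := 'rV[R]_2.
Notation tri := (triangle R).

Definition vt (t : tri) (k : 'I_3) : pt := nth 0 (tri_vs t) k.

Lemma vt0 (t : tri) : vt t 0 = t.1.1. Proof. by []. Qed.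
Lemma vt1 (t : tri) : vt t 1 = t.1.2. Proof. by []. Qed.
Lemma vt2 (t : tri) : vt t 2 = t.2. Proof. by []. Qed.

Definition ox (t : tri) (k : 'I_3) := vt t k.
Definition oy (t : tri) (k : 'I_3) := vt t (ordS k).
Definition oz (t : tri) (k : 'I_3) := vt t (ordS (ordS k)).

Lemma k3 (k : 'I_3) : [\/ k = 0, k = 1 | k = 2].
Proof. case: k => [[|[|[|//]]] ?]; [constructor 1|constructor 2|constructor 3]; exact: val_inj. Qed.

Lemma ordS30 : ordS (0 : 'I_3) = 1. Proof. exact: val_inj. Qed.
Lemma ordS31 : ordS (1 : 'I_3) = 2. Proof. exact: val_inj. Qed.
Lemma ordS32 : ordS (2 : 'I_3) = 0. Proof. exact: val_inj. Qed.

Ltac kcase k := case: (k3 k) => ->; rewrite /ox /oy /oz ?ordS30 ?ordS31 ?ordS32 ?vt0 ?vt1 ?vt2.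

Lemma orient_k (t : tri) k : orient (ox t k) (oy t k) (oz t k) = orient t.1.1 t.1.2 t.2.
Proof. by kcase k; rewrite /orient; ring. Qed.

Lemma mem_tri (t : tri) (p : pt) : (p \in tri_vs t) = [|| p == t.1.1, p == t.1.2 | p == t.2].
Proof. by rewrite /tri_vs !inE. Qed.

Lemma mem_k (t : tri) k (p : pt) : (p \in tri_vs t) = [|| p == ox t k, p == oy t k | p == oz t k].
Proof.
rewrite mem_tri; kcase k => //.
- by case: (p == t.1.1); case: (p == t.1.2); case: (p == t.2).
- by case: (p == t.1.1); case: (p == t.1.2); case: (p == t.2).
Qed.

Lemma conv_k (t : tri) k (p : pt) : in_conv (tri_vs t) p <-> conv3 (ox t k) (oy t k) (oz t k) p.
Proof.
rewrite /tri_vs in_conv3; kcase k => //; split.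
- by move/conv3_rot.
- by move/conv3_rot/conv3_rot.
- by move/conv3_rot/conv3_rot.
- by move/conv3_rot.
Qed.

Lemma conv3_swap (a b c x : pt) : conv3 a b c x -> conv3 b a c x.
Proof.
case=> al [be [ga [h0 h1 h2 h3 ->]]]; exists be, al, ga; split => //; first lra.
by rewrite (addrC (al *: a)).
Qed.

Lemma nondeg_neq (a b c : pt) : orient a b c != 0 -> [/\ a != b, b != c & a != c].
Proof.
move=> h; split; apply/eqP => e; move: h; rewrite e ?orient_aab ?orient_abb ?orient_aba eqxx //.
Qed.

Lemma nondeg_uniq (t : tri) : nondegenerate t -> uniq (tri_vs t).
Proof.
rewrite /nondegenerate => /nondeg_neq [h1 h2 h3].
by rewrite /tri_vs /= !inE negb_or h1 h3 h2.
Qed.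

Lemma tri_edge (t : tri) (x y : pt) : nondegenerate t -> x \in tri_vs t -> y \in tri_vs t -> x != y ->
  exists k, ((ox t k == x) && (oy t k == y)) || ((ox t k == y) && (oy t k == x)).
Proof.
move=> nd; rewrite !mem_tri => hx hy hxy.
case/nondeg_neq: nd => n1 n2 n3.
case/or3P: hx => /eqP ex; case/or3P: hy => /eqP ey; subst x y.
all: try by rewrite eqxx in hxy.
- by exists 0; rewrite /ox /oy ordS30 !eqxx.
- by exists 2; rewrite /ox /oy ordS32 !eqxx orbT.
- by exists 0; rewrite /ox /oy ordS30 !eqxx orbT.
- by exists 1; rewrite /ox /oy ordS31 !eqxx.
- by exists 2; rewrite /ox /oy ordS32 !eqxx.
- by exists 1; rewrite /ox /oy ordS31 !eqxx orbT.
Qed.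

Lemma third_k (t : tri) k (p : pt) : nondegenerate t -> p \in tri_vs t -> p != ox t k -> p != oy t k ->
  p = oz t k.
Proof. by move=> _; rewrite (mem_k t k) => /or3P[/eqP->|/eqP->|/eqP->]; rewrite ?eqxx. Qed.

Lemma k_uniq (t : tri) k1 k2 : nondegenerate t ->
  ((ox t k1 == ox t k2) && (oy t k1 == oy t k2)) ||
  ((ox t k1 == oy t k2) && (oy t k1 == ox t k2)) -> k1 = k2.
Proof.
move=> /nondeg_neq[n1 n2 n3].
have n1' := n1; have n2' := n2; have n3' := n3.
rewrite eq_sym in n1'; rewrite eq_sym in n2'; rewrite eq_sym in n3'.
case: (k3 k1) => ->; case: (k3 k2) => ->; rewrite /ox /oy ?ordS30 ?ordS31 ?ordS32 ?vt0 ?vt1 ?vt2 //.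
all: by rewrite ?eqxx ?(negPf n1) ?(negPf n2) ?(negPf n3) ?(negPf n1') ?(negPf n2') ?(negPf n3') ?andbF ?andFb.
Qed.


Fixpoint dedup (s : seq tri) : seq tri :=
  if s is t :: s' then
    let d := dedup s' in
    if has (fun u => perm_eq (tri_vs u) (tri_vs t)) d then d else t :: d
  else [::].

Lemma dedup_sub s : {subset dedup s <= s}.
Proof.
elim: s => [//|t s IH] u /=; case: ifP => _.
  by move/IH => h; rewrite in_cons h orbT.
by rewrite !in_cons => /orP[->//|/IH ->]; rewrite orbT.
Qed.

Lemma dedup_rep s t : t \in s -> exists2 u, u \in dedup s & perm_eq (tri_vs u) (tri_vs t).
Proof.
elim: s => [//|t' s IH]; rewrite in_cons => /orP[/eqP->|/IH [u hu hp]] /=.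
  case: ifP => [/hasP [u hu hp]|_]; first by exists u.
  by exists t' => //; rewrite mem_head.
case: ifP => _; first by exists u.
by exists u => //; rewrite in_cons hu orbT.
Qed.

Lemma dedup_pw s : pairwise (fun u w => ~~ perm_eq (tri_vs u) (tri_vs w)) (dedup s).
Proof.
elim: s => [//|t s IH] /=; case: ifP => // hn.
rewrite /= IH andbT; apply/allP => w hw; apply/negP => hp.
by move/negP: hn; apply; apply/hasP; exists w => //; rewrite perm_sym.
Qed.

Lemma dedup_idx s (i j : 'I_(size (dedup s))) (d : tri) :
  perm_eq (tri_vs (nth d (dedup s) i)) (tri_vs (nth d (dedup s) j)) -> i = j.
Proof.
move=> hp; have := dedup_pw s; move/(pairwiseP d) => h.
case: (ltngtP i j) => hij.
- by have := h i j (ltn_ord i) (ltn_ord j) hij; rewrite hp.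
- by have := h j i (ltn_ord j) (ltn_ord i) hij; rewrite perm_sym hp.
- exact: val_inj.
Qed.
End Tri.


Lemma ratio_pos (R : realFieldType) (a b : R) : 0 < a * b -> 0 < a / b.
Proof.
move=> h; have b0 : b != 0 by apply/eqP => e; rewrite e mulr0 ltxx in h.
have -> : a / b = (a * b) / (b * b) by rewrite invfM mulrA mulfK.
by apply: divr_gt0 => //; rewrite lt_def mulf_neq0 //= -expr2 sqr_ge0.
Qed.

Lemma small_theta (R : realFieldType) (K1 K2 : R) : exists th : R,
  [/\ 0 < th, th <= 2^-1, 0 <= (1 - th) / 2 + th * K1 & 0 <= (1 - th) / 2 + th * K2].
Proof.
set M := `|K1| + `|K2| + 1.
have M1 : 1 <= M by rewrite /M lerDr addr_ge0.
have a1 : - `|K1| <= K1 by rewrite lerNl -normrN ler_norm.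
have a2 : - `|K2| <= K2 by rewrite lerNl -normrN ler_norm.
have n1 : 0 <= `|K1| by []. have n2 : 0 <= `|K2| by [].
exists (4 * M)^-1.
have M0 : 0 < M by lra.
have hth : (4 * M)^-1 * M = 4^-1 by rewrite invfM -mulrA mulVf ?mulr1 // gt_eqF.
have t0 : 0 < (4 * M)^-1 by rewrite invr_gt0 mulr_gt0 // ltr0n.
set th := (4 * M)^-1 in hth t0 *.
have tM : th <= 4^-1.
  by rewrite -hth ler_pMr //.
have e1 : th * `|K1| <= th * M by rewrite ler_pM2l // /M; lra.
have e2 : th * `|K2| <= th * M by rewrite ler_pM2l // /M; lra.
have f1 : - (th * `|K1|) <= th * K1 by rewrite -mulrN ler_pM2l.
have f2 : - (th * `|K2|) <= th * K2 by rewrite -mulrN ler_pM2l.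
split; try lra.
Qed.

Section Main.
Variable R : realFieldType.
Notation pt := 'rV[R]_2.
Notation tri := (triangle R).
Variable n : nat.
Notation c := n.+3.
Variable v : 'I_c -> pt.
Variable T : seq tri.
Variable lab : pt -> 'I_c.
Hypothesis hconv : convex_polygon v.
Hypothesis htri : triangulation v T.
Hypothesis hsp : sperner_labelling v T lab.

Lemma nd_T t : t \in T -> nondegenerate t.
Proof. by case: htri => h _ _ _; apply: h. Qed.

Lemma cover1 t p : t \in T -> in_conv (tri_vs t) p -> polygon_pts v p.
Proof. by case: htri => _ h _ _ ht hp; apply/h; exists t. Qed.

Lemma cover2 p : polygon_pts v p -> exists2 t, t \in T & in_conv (tri_vs t) p.
Proof. by case: htri => _ h _ _; move/h. Qed.

Lemma f2f t1 t2 p : t1 \in T -> t2 \in T -> in_conv (tri_vs t1) p -> in_conv (tri_vs t2) p ->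
  in_conv [seq q <- tri_vs t1 | q \in tri_vs t2] p.
Proof. by case: htri => _ _ h _ h1 h2 c1 c2; apply/(h _ _ h1 h2). Qed.

Lemma vert_conv (t : tri) p : p \in tri_vs t -> in_conv (tri_vs t) p.
Proof.
rewrite mem_tri /tri_vs in_conv3 => /or3P[]/eqP->.
- by exists 1, 0, 0; split => //; rewrite ?scale0r ?scale1r ?addr0 //; lra.
- by exists 0, 1, 0; split => //; rewrite ?scale0r ?scale1r ?addr0 ?add0r //; lra.
- by exists 0, 0, 1; split => //; rewrite ?scale0r ?scale1r ?addr0 ?add0r //; lra.
Qed.

Lemma vert_H t p : t \in T -> p \in tri_vs t -> polygon_pts v p.
Proof. by move=> ht hp; apply: (cover1 ht); apply: vert_conv. Qed.

Definition TT := dedup T.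
Definition HE := ('I_(size TT) * 'I_3)%type.
Definition d0 : tri := (0, 0, 0).
Definition tr (h : HE) := nth d0 TT h.1.
Definition ex (h : HE) := ox (tr h) h.2.
Definition ey (h : HE) := oy (tr h) h.2.
Definition ez (h : HE) := oz (tr h) h.2.

Lemma tr_T h : tr h \in T.
Proof. by apply: dedup_sub; rewrite mem_nth. Qed.

Lemma tr_nd h : nondegenerate (tr h).
Proof. exact: nd_T (tr_T h). Qed.

Lemma he_o h : orient (ex h) (ey h) (ez h) != 0.
Proof. by rewrite /ex /ey /ez orient_k; apply: tr_nd. Qed.

Lemma he_mem h p : (p \in tri_vs (tr h)) = [|| p == ex h, p == ey h | p == ez h].
Proof. exact: mem_k. Qed.

Lemma he_conv h p : in_conv (tri_vs (tr h)) p <-> conv3 (ex h) (ey h) (ez h) p.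
Proof. exact: conv_k. Qed.

Lemma he_H h p : p \in tri_vs (tr h) -> polygon_pts v p.
Proof. exact: vert_H (tr_T h). Qed.

Definition Pb (h h' : HE) : bool :=
  (((ex h' == ex h) && (ey h' == ey h)) || ((ex h' == ey h) && (ey h' == ex h))) &&
  (orient (ex h) (ey h) (ez h') * orient (ex h) (ey h) (ez h) < 0).

Lemma P_sym h h' : Pb h h' -> Pb h' h.
Proof.
case/andP => /orP[/andP[/eqP e1 /eqP e2]|/andP[/eqP e1 /eqP e2]] hl; apply/andP; split.
- by rewrite e1 e2 !eqxx.
- by rewrite e1 e2 mulrC.
- by rewrite e1 e2 !eqxx orbT.
- by rewrite e1 e2 !(orient_swap (ex h)) mulrNN mulrC.
Qed.


Definition endp (h' : HE) (x y : pt) :=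
  ((ex h' == x) && (ey h' == y)) || ((ex h' == y) && (ey h' == x)).

Lemma endp_mem h' x y p : endp h' x y -> ((p == ex h') || (p == ey h')) = ((p == x) || (p == y)).
Proof. by case/orP => /andP[/eqP-> /eqP->] //; rewrite orbC. Qed.

Lemma endp_orient h' x y p : endp h' x y -> (p == ex h') || (p == ey h') -> orient x y p = 0.
Proof.
move=> e; rewrite (endp_mem p e) => /orP[]/eqP->; by rewrite ?orient_aba ?orient_abb.
Qed.

Lemma he_conv_xy h' x y z' q : endp h' x y -> ez h' = z' -> conv3 x y z' q ->
  in_conv (tri_vs (tr h')) q.
Proof.
move=> e hz hc; apply/he_conv; rewrite hz.
by case/orP: e => /andP[/eqP-> /eqP->] //; apply: conv3_swap.
Qed.

Lemma P_uniq h h1 h2 : Pb h h1 -> Pb h h2 -> h1 = h2.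
Proof.
set x := ex h; set y := ey h.
case/andP => E1 N1; case/andP => E2 N2.
rewrite -/x -/y in E1 E2 N1 N2.
change (is_true (endp h1 x y)) in E1; change (is_true (endp h2 x y)) in E2.
set z1 := ez h1 in N1; set z2 := ez h2 in N2.
set b := orient x y (ez h) in N1 N2.
have pp : 0 < orient x y z1 * orient x y z2 by nra.
have o1 : orient x y z1 != 0 by apply/eqP => e; rewrite e mul0r ltxx in pp.
have o2 : orient x y z2 != 0 by apply/eqP => e; rewrite e mulr0 ltxx in pp.
set o := orient x y z2 in pp o2 *.
have [th [th0 th1 c1 c2]] := small_theta (orient y z2 z1 / o) (orient z2 x z1 / o).
set q := (1 - th) / 2 *: x + (1 - th) / 2 *: y + th *: z1.
have hs : (1 - th) / 2 + (1 - th) / 2 + th = 1 by lra.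
have q1 : conv3 x y z1 q by exists ((1 - th) / 2), ((1 - th) / 2), th; split => //; lra.
have oq : orient x y q = th * orient x y z1.
  by rewrite /q orient3 // orient_aba orient_abb !mulr0 !add0r.
have q2 : conv3 x y z2 q.
  apply: bary_in => //.
  - rewrite /q orient3 // orient_aba mulr0 addr0 -(orient_cyc x y z2) -/o.
    by rewrite mulrDl mulfK // -mulrA.
  - rewrite /q orient3 // orient_abb mulr0 add0r -(orient_cyc y z2 x) -(orient_cyc x y z2) -/o.
    by rewrite mulrDl mulfK // -mulrA.
  - by rewrite oq -mulrA; apply: mulr_ge0; [apply: ltW | apply/ltW/ratio_pos].
have i1 := he_conv_xy E1 erefl q1.
have i2 := he_conv_xy E2 erefl q2.
have F := f2f (tr_T h1) (tr_T h2) i1 i2.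
have z1in : z1 \in tri_vs (tr h2).
  apply: NNPP => hn.
  have : orient x y q = 0.
    apply: (conv_eq0 F) => p; rewrite mem_filter => /andP[hp2 hp1].
    move: hp1; rewrite he_mem => /or3P[hp|hp|hp].
    - by apply: (endp_orient E1); rewrite hp.
    - by apply: (endp_orient E1); rewrite hp orbT.
    - by move/eqP: hp => hp; rewrite hp in hp2.
  by apply/eqP; rewrite oq mulf_neq0 // gt_eqF.
have ez12 : z1 = z2.
  move: z1in; rewrite he_mem => /or3P[hp|hp|/eqP//].
  - by move: o1; rewrite -(endp_orient (p := z1) E2) ?hp ?eqxx.
  - by move: o1; rewrite -(endp_orient (p := z1) E2) ?hp ?orbT ?eqxx.
have idx : h1.1 = h2.1.
  apply: (@dedup_idx _ T _ _ d0).
  apply: uniq_perm; try exact: (nondeg_uniq (tr_nd _)).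
  move=> p; rewrite -/(tr h1) -/(tr h2) !he_mem -/z1 -/z2 -ez12.
  by rewrite !orbA (endp_mem p E1) (endp_mem p E2).
have etr : tr h2 = tr h1 by rewrite /tr idx.
have k12 : h1.2 = h2.2.
  apply: (k_uniq (tr_nd h1)).
  move: E1 E2; rewrite /endp /ex /ey etr.
  by do 2 (case/orP => /andP[/eqP-> /eqP->]); rewrite !eqxx ?orbT.
by rewrite [h1]surjective_pairing [h2]surjective_pairing idx k12.
Qed.


Lemma orient_2mz (a b m z : pt) : orient a b (2 *: m - z) = 2 * orient a b m - orient a b z.
Proof. by rewrite /orient !mxE; ring. Qed.

Lemma he_neq h : [/\ ex h != ey h, ey h != ez h & ex h != ez h].
Proof. exact: nondeg_neq (he_o h). Qed.

Lemma sgm_neq0 : sgm v != 0.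
Proof. by apply/eqP => e; have := sig_sq hconv; rewrite e mulr0 => /eqP; rewrite eq_sym oner_eq0. Qed.

Lemma mk_he (u : tri) k : u \in TT -> exists h' : HE, tr h' = u /\ h'.2 = k.
Proof.
move=> hu; have hi : (index u TT < size TT)%N by rewrite index_mem.
exists (Ordinal hi, k).
by split => //; rewrite /tr /= nth_index.
Qed.

Lemma P_ex h : (forall i, ~ (seg v i (ex h) /\ seg v i (ey h))) -> exists h', Pb h h'.
Proof.
move=> hns.
have Hx : polygon_pts v (ex h) by apply: (he_H (h := h)); rewrite he_mem eqxx.
have Hy : polygon_pts v (ey h) by apply: (he_H (h := h)); rewrite he_mem eqxx orbT.
set x := ex h in Hx hns *; set y := ey h in Hy hns *; set z := ez h.
have o0 : orient x y z != 0 := he_o h.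
have [nxy nyz nxz] := he_neq h.
set s := (2 : R)^-1.
have s0 : 0 < s by rewrite invr_gt0 ltr0n.
have s1 : s < 1 by rewrite invf_lt1 // ltr1n.
set m := (1 - s) *: x + s *: y.
have mt : in_conv (tri_vs (tr h)) m.
  apply/he_conv; exists (1 - s), s, 0; split; [lra|lra|done|lra|by rewrite scale0r addr0].
have strict i : 0 < sgm v * oi v i m.
  have hx := inH_half hconv i Hx; have hy := inH_half hconv i Hy.
  have E : sgm v * oi v i m = (1 - s) * (sgm v * oi v i x) + s * (sgm v * oi v i y).
    by rewrite /oi /m orient_lerp; ring.
  rewrite lt_def E; apply/andP; split; last by rewrite -E; apply: (inH_half hconv); apply: cover1 (tr_T h) mt.
  apply/negP => /eqP e0.
  have ex0 : sgm v * oi v i x = 0 by nra.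
  have ey0 : sgm v * oi v i y = 0 by nra.
  apply: (hns i); split; apply: (line_seg hconv).
  - exact: Hx.
  - by move/eqP: ex0; rewrite mulf_eq0 (negPf sgm_neq0) /= => /eqP.
  - exact: Hy.
  - by move/eqP: ey0; rewrite mulf_eq0 (negPf sgm_neq0) /= => /eqP.
pose q := 2 *: m - z.
pose me e := (1 - e) *: m + e *: q.
have evH : ev (fun e => forall i, i \in enum 'I_c -> 0 < sgm v * oi v i (me e)).
  apply: ev_all => i _.
  have := @ev_lin_pos R (sgm v * oi v i m) (sgm v * oi v i q) (strict i); apply: ev_impl => e.
  move=> he; rewrite /me /oi orient_lerp mulrDr !(mulrCA (sgm v)); exact he.
have evT : ev (fun e => forall t', t' \in T -> in_conv (tri_vs t') (me e) -> in_conv (tri_vs t') m).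
  apply: ev_all => t' ht'.
  case: (classic (in_conv (tri_vs t') m)) => hm.
    by exists 1; [rewrite ltr01 | move=> *].
  have nd := nd_T ht'.
  have : ~ conv3 t'.1.1 t'.1.2 t'.2 m by move=> hc; apply: hm; apply/in_conv3.
  move/(ev_notin q nd); apply: ev_impl => e hn hc; exfalso; apply: hn; exact/in_conv3.
case: (ev_ex (ev_and evH evT)) => e e0 [hH hT].
have meH : polygon_pts v (me e).
  apply: (fan hconv) => i; apply: ltW; apply: hH; by rewrite mem_enum.
case: (cover2 meH) => t' ht' hc'.
have mt' := hT t' ht' hc'.
have F := f2f (tr_T h) ht' mt mt'.
have xin : x \in tri_vs t'.
  apply: NNPP => hn.
  have : orient y z m = 0.
    apply: (conv_eq0 F) => p; rewrite mem_filter => /andP[hp2 hp1].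
    move: hp1; rewrite he_mem => /or3P[]/eqP hp.
    - by rewrite hp in hp2.
    - by rewrite hp orient_aba.
    - by rewrite hp orient_abb.
  rewrite /m orient_lerp orient_aba mulr0 addr0 -(orient_cyc x y z) => /eqP.
  by rewrite mulf_eq0 (negPf o0) orbF; lra.
have yin : y \in tri_vs t'.
  apply: NNPP => hn.
  have : orient z x m = 0.
    apply: (conv_eq0 F) => p; rewrite mem_filter => /andP[hp2 hp1].
    move: hp1; rewrite he_mem => /or3P[]/eqP hp.
    - by rewrite hp orient_abb.
    - by rewrite hp in hp2.
    - by rewrite hp orient_aba.
  rewrite /m orient_lerp orient_abb mulr0 add0r -(orient_cyc y z x) -(orient_cyc x y z) => /eqP.
  by rewrite mulf_eq0 (negPf o0) orbF; lra.
have ome : orient x y z * orient x y (me e) < 0.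
  rewrite /me /q orient_lerp orient_2mz /m orient_lerp orient_aba orient_abb.
  have : 0 < orient x y z * orient x y z.
    by rewrite lt_def mulf_neq0 //= -expr2 sqr_ge0.
  nra.
case: (conv_lt_ex hc' ome) => p hp hop.
case: (dedup_rep ht') => u hu hperm.
have memu w : (w \in tri_vs u) = (w \in tri_vs t') by apply: perm_mem.
have ndu : nondegenerate u by apply: nd_T; apply: dedup_sub.
case: (tri_edge ndu (x := x) (y := y)); rewrite ?memu // => k hk.
case: (mk_he k hu) => h' [trh' kh'].
exists h'; apply/andP; split.
  by rewrite /ex /ey trh' kh' -/x -/y.
have pz : p = ez h'.
  rewrite /ez trh' kh'; apply: third_k => //; first by rewrite memu.
  - apply/eqP => ep; move: hop; rewrite ep.
    by case/orP: hk => /andP[/eqP-> _]; rewrite ?orient_aba ?orient_abb mulr0 ltxx.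
  - apply/eqP => ep; move: hop; rewrite ep.
    by case/orP: hk => /andP[_ /eqP->]; rewrite ?orient_aba ?orient_abb mulr0 ltxx.
by rewrite -/x -/y -/z -pz mulrC.
Qed.



Definition pb (P : Prop) : bool := if excluded_middle_informative P then true else false.
Lemma pbP (P : Prop) : reflect P (pb P).
Proof. by rewrite /pb; case: excluded_middle_informative => h; constructor. Qed.

Definition la := lab (v (i0 n)).
Definition lb := lab (v (i1 n)).
Definition g (u w : 'I_c) : R := ((u == la) && (w == lb))%:R - ((u == lb) && (w == la))%:R.
Definition psi (p : pt) : R := ((lab p == lb) && pb (seg v (i0 n) p))%:R.
Definition G (x y : pt) : R := g (lab x) (lab y) - (psi y - psi x).
Definition F (h : HE) : R := Num.sg (orient (ex h) (ey h) (ez h)) * G (ex h) (ey h).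
Definition Eb (h : HE) : bool :=
  ((ex h == v (i1 n)) && ~~ pb (seg v (i0 n) (ey h))) ||
  ((ey h == v (i1 n)) && ~~ pb (seg v (i0 n) (ex h))).

Lemma g_anti u w : g w u = - g u w.
Proof. by rewrite /g opprB; case: (w == la); case: (u == lb); case: (w == lb); case: (u == la). Qed.

Lemma G_anti x y : G y x = - G x y.
Proof. rewrite /G g_anti; ring. Qed.

Lemma lab_inj i j : lab (v i) = lab (v j) -> i = j.
Proof. by case: hsp => h _; apply: h. Qed.

Lemma lab_seg h i p : p \in tri_vs (tr h) -> seg v i p ->
  lab p = lab (v i) \/ lab p = lab (v (ordS i)).
Proof. by case: hsp => _ hs2 hp hs; apply: hs2 => //; exists (tr h) => //; apply: tr_T. Qed.

Lemma sg_of_sgm X : 0 < sgm v * X -> Num.sg X = sgm v.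
Proof.
have h2 := sig_sq hconv.
have : (sgm v - 1) * (sgm v + 1) = 0 by rewrite mulrDr mulrBl h2; ring.
move/eqP; rewrite mulf_eq0 => /orP[/eqP e|/eqP e] hX.
- have s1 : sgm v = 1 by lra.
  rewrite s1 in hX *; rewrite mul1r in hX; by rewrite gtr0_sg.
- have s1 : sgm v = -1 by lra.
  rewrite s1 in hX *; have hX' : X < 0 by lra.
  by rewrite ltr0_sg.
Qed.

Lemma sg_neg (A B : R) : A * B < 0 -> Num.sg A = - Num.sg B.
Proof.
move=> h; case: (ltrgtP A 0) => hA; case: (ltrgtP B 0) => hB.
all: try (rewrite ?hA ?hB in h; by rewrite ?mul0r ?mulr0 ltxx in h).
all: try (exfalso; nra).
- by rewrite ltr0_sg // gtr0_sg.
- by rewrite gtr0_sg // ltr0_sg // opprK.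
Qed.

Lemma F_anti h h' : Pb h h' -> F h' = - F h.
Proof.
case/andP => /orP[/andP[/eqP e1 /eqP e2]|/andP[/eqP e1 /eqP e2]] hl; rewrite /F e1 e2.
- by rewrite (sg_neg hl) mulNr.
- rewrite G_anti (orient_swap (ex h)) sgrN (sg_neg hl); ring.
Qed.


Lemma la_lb : la != lb.
Proof. apply/eqP => /lab_inj /eqP; apply/negP; rewrite /i1 eq_sym; exact: ordS_neq. Qed.

Lemma v1_seg0 : seg v (i0 n) (v (i1 n)).
Proof.
apply/in_conv2; exists 1; split; [exact: ler01 | exact: lexx |].
by rewrite subrr scale0r add0r scale1r.
Qed.

Lemma psi_seg1 p : seg v (i1 n) p -> psi p = (p == v (i1 n))%:R.
Proof.
move=> hs; rewrite /psi; case: (eqVneq p (v (i1 n))) => [->|hne].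
  by rewrite /lb !eqxx /=; case: pbP => // hn; exfalso; apply: hn; exact: v1_seg0.
case: pbP => h0; last by rewrite andbF.
by exfalso; move/eqP: hne; apply; apply: (seg01 hconv).
Qed.

Lemma sg_pos_mul (s X : R) : 0 < s -> Num.sg (s * X) = Num.sg X.
Proof. by move=> s0; rewrite sgrM gtr0_sg // mul1r. Qed.

Lemma F_bd h : ~ (exists h', Pb h h') -> F h = sgm v * (Eb h)%:R.
Proof.
move=> hn.
have [i [sx sy]] : exists i, seg v i (ex h) /\ seg v i (ey h).
  apply: NNPP => hh; apply: hn; apply: P_ex => i [a1 a2]; apply: hh; by exists i.
have xin : ex h \in tri_vs (tr h) by rewrite he_mem eqxx.
have yin : ey h \in tri_vs (tr h) by rewrite he_mem eqxx orbT.
have Hz : polygon_pts v (ez h) by apply: (he_H (h := h)); rewrite he_mem eqxx !orbT.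
have [nxy _ _] := he_neq h.
have o0 := he_o h.
have lx := lab_seg xin sx; have ly := lab_seg yin sy.
rewrite /F /Eb /G.
case: (eqVneq i (i0 n)) => [ei|ni0].
  subst i.
  have px : psi (ex h) = (lab (ex h) == lb)%:R.
    by rewrite /psi; case: pbP => [_|hh]; [rewrite andbT | exfalso; exact: hh sx].
  have py : psi (ey h) = (lab (ey h) == lb)%:R.
    by rewrite /psi; case: pbP => [_|hh]; [rewrite andbT | exfalso; exact: hh sy].
  have -> : pb (seg v (i0 n) (ex h)) = true by case: pbP.
  have -> : pb (seg v (i0 n) (ey h)) = true by case: pbP.
  rewrite px py !andbF mulr0.
  have hab := la_lb; have hba : lb != la by rewrite eq_sym.
  case: lx => ->; case: ly => ->; rewrite /g -/la -/lb ?eqxx ?(negPf hab) ?(negPf hba) /=; ring.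
case: (eqVneq i (i1 n)) => [ei|ni1].
  subst i.
  have lc : lab (v (i2 n)) != la.
    apply/eqP => /lab_inj /eqP; apply/negP; rewrite /i2 /i1; exact: ordSS_neq.
  have hba : lb != la by rewrite eq_sym la_lb.
  have gx : lab (ex h) != la by case: lx => ->.
  have gy : lab (ey h) != la by case: ly => ->.
  have -> : g (lab (ex h)) (lab (ey h)) = 0 by rewrite /g (negPf gx) (negPf gy) andbF; ring.
  rewrite (psi_seg1 sx) (psi_seg1 sy).
  have nsx : (ex h != v (i1 n)) -> pb (seg v (i0 n) (ex h)) = false.
    by move=> hne; case: pbP => // hh; exfalso; move/eqP: hne; apply; apply: (seg01 hconv).
  have nsy : (ey h != v (i1 n)) -> pb (seg v (i0 n) (ey h)) = false.
    by move=> hne; case: pbP => // hh; exfalso; move/eqP: hne; apply; apply: (seg01 hconv).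
  have hzi := inH_half hconv (i1 n) Hz.
  case: (eqVneq (ex h) (v (i1 n))) => ex1.
    have ey1 : ey h != v (i1 n) by rewrite -ex1 eq_sym.
    rewrite (negPf ey1) (nsy ey1) /=.
    case/(seg_param): sy => s [s0 s1 hy].
    have e : orient (ex h) (ey h) (ez h) = s * oi v (i1 n) (ez h) by rewrite ex1 hy orient_mid2.
    have sn0 : s != 0.
      by apply/eqP => e0; move: ey1; rewrite hy e0 subr0 scale1r scale0r addr0 eqxx.
    have oz0 : oi v (i1 n) (ez h) != 0 by apply/eqP => e0; move: o0; rewrite e e0 mulr0 eqxx.
    have sp : 0 < s by rewrite lt_def sn0.
    have pz : 0 < sgm v * oi v (i1 n) (ez h) by rewrite lt_def mulf_neq0 // sgm_neq0.
    rewrite e sg_pos_mul // (sg_of_sgm pz); ring.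
  case: (eqVneq (ey h) (v (i1 n))) => ey1.
    rewrite (nsx ex1) /=.
    case/(seg_param): sx => s [s0 s1 hx].
    have e : orient (ex h) (ey h) (ez h) = - (s * oi v (i1 n) (ez h)).
      by rewrite ey1 orient_swap hx orient_mid2.
    have sn0 : s != 0.
      by apply/eqP => e0; move: ex1; rewrite hx e0 subr0 scale1r scale0r addr0 eqxx.
    have oz0 : oi v (i1 n) (ez h) != 0.
      by apply/eqP => e0; move: o0; rewrite e e0 mulr0 oppr0 eqxx.
    have sp : 0 < s by rewrite lt_def sn0.
    have pz : 0 < sgm v * oi v (i1 n) (ez h) by rewrite lt_def mulf_neq0 // sgm_neq0.
    rewrite e sgrN sg_pos_mul // (sg_of_sgm pz); ring.
  rewrite /=; ring.
have ni1' : ordS i != i1 n by rewrite /i1 (inj_eq (@ordS_inj _)).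
have lbi : lab (v i) != lb by apply/eqP => /lab_inj /eqP; rewrite (negPf ni1).
have lbi' : lab (v (ordS i)) != lb by apply/eqP => /lab_inj /eqP; rewrite (negPf ni1').
have gx : lab (ex h) != lb by case: lx => ->.
have gy : lab (ey h) != lb by case: ly => ->.
have -> : g (lab (ex h)) (lab (ey h)) = 0 by rewrite /g (negPf gx) (negPf gy) andbF; ring.
have -> : psi (ex h) = 0 by rewrite /psi (negPf gx).
have -> : psi (ey h) = 0 by rewrite /psi (negPf gy).
have hx1 : ex h != v (i1 n).
  by apply/eqP => e; have := seg_v1 hconv ni0 ni1; apply; rewrite -e.
have hy1 : ey h != v (i1 n).
  by apply/eqP => e; have := seg_v1 hconv ni0 ni1; apply; rewrite -e.
rewrite (negPf hx1) (negPf hy1) /=; ring.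
Qed.


Lemma two_lines p : polygon_pts v p -> oi v (i0 n) p = 0 -> oi v (i1 n) p = 0 -> p = v (i1 n).
Proof.
move=> hp h0 h1; apply: (seg01 hconv); exact: (line_seg hconv).
Qed.

Lemma LF : exists h, ~ (exists h', Pb h h') /\ Eb h.
Proof.
pose qe e := (1 - e) *: v (i1 n) + e *: v (i2 n).
have evT : ev (fun e => forall t', t' \in T -> in_conv (tri_vs t') (qe e) -> in_conv (tri_vs t') (v (i1 n))).
  apply: ev_all => t' ht'.
  case: (classic (in_conv (tri_vs t') (v (i1 n)))) => hm.
    by exists 1; [rewrite ltr01 | move=> *].
  have nd := nd_T ht'.
  have : ~ conv3 t'.1.1 t'.1.2 t'.2 (v (i1 n)) by move=> hc; apply: hm; apply/in_conv3.
  move/(ev_notin (v (i2 n)) nd); apply: ev_impl => e hn hc; exfalso; apply: hn; exact/in_conv3.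
case: (ev_ex (ev_and evT (@ev_lt1 R))) => e e0 [hT e1].
have sq : seg v (i1 n) (qe e).
  by apply/in_conv2; exists e; split => //; apply: ltW.
have qH := seg_H sq.
case: (cover2 qH) => t ht hq.
have v1t := hT t ht hq.
have hvH p : p \in tri_vs t -> polygon_pts v p by apply: vert_H.
have sgm0 := sgm_neq0.
have v1in : v (i1 n) \in tri_vs t.
  have w1 : sgm v * orient (v (i0 n)) (v (i1 n)) (v (i1 n)) = 0 by rewrite orient_abb mulr0.
  have w2 : sgm v * orient (v (i1 n)) (v (i2 n)) (v (i1 n)) = 0 by rewrite orient_aba mulr0.
  have [p hp [z1 z2]] := conv_two_zero (a := v (i0 n)) (b := v (i1 n)) (c := v (i1 n))
     (d := v (i2 n)) (k1 := sgm v) (k2 := sgm v) v1t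
     (fun p hp => inH_half hconv (i0 n) (hvH p hp)) w1
     (fun p hp => inH_half hconv (i1 n) (hvH p hp)) w2.
  move/eqP: z1; rewrite mulf_eq0 (negPf sgm0) /= => /eqP z1.
  move/eqP: z2; rewrite mulf_eq0 (negPf sgm0) /= => /eqP z2.
  by rewrite -(two_lines (hvH p hp) z1 z2).
have pos0 : 0 < sgm v * orient (v (i0 n)) (v (i1 n)) (qe e).
  rewrite /qe orient_lerp orient_abb mulr0 add0r mulrCA; apply: mulr_gt0 => //.
  by case/andP: (i2_nin n) => a1 a2; have := side hconv a1 a2.
have w3 : sgm v * orient (v (i1 n)) (v (i2 n)) (qe e) = 0.
  by have := seg_oi sq; rewrite /oi => ->; rewrite mulr0.
have [y hy [y1 y2]] := conv_zero_pos (a := v (i1 n)) (b := v (i2 n)) (c := v (i0 n))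
     (d := v (i1 n)) (k1 := sgm v) (k2 := sgm v) hq
     (fun p hp => inH_half hconv (i1 n) (hvH p hp)) w3 pos0.
have yH := hvH y hy.
move/eqP: y1; rewrite mulf_eq0 (negPf sgm0) /= => /eqP y1.
have sy : seg v (i1 n) y by apply: (line_seg hconv).
have yv1 : y != v (i1 n) by apply/eqP => e'; move: y2; rewrite e' orient_abb mulr0 ltxx.
have ny0 : ~ seg v (i0 n) y by move=> h0; move/eqP: yv1; apply; apply: (seg01 hconv).
case: (dedup_rep ht) => u hu hperm.
have memu w : (w \in tri_vs u) = (w \in tri_vs t) by apply: perm_mem.
have ndu : nondegenerate u by apply: nd_T; apply: dedup_sub.
case: (tri_edge ndu (x := v (i1 n)) (y := y)); rewrite ?memu // 1?eq_sym // => k hk.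
case: (mk_he k hu) => h [trh kh].
have exy : ((ex h == v (i1 n)) && (ey h == y)) || ((ex h == y) && (ey h == v (i1 n))).
  by rewrite /ex /ey trh kh.
exists h; split; last first.
  have npb : pb (seg v (i0 n) y) = false by case: pbP.
  by rewrite /Eb; case/orP: exy => /andP[/eqP-> /eqP->]; rewrite npb eqxx ?orbT.
case=> h' /andP[_ N].
case/(seg_param): sy => s [s0 s1 hys].
have Hz' : polygon_pts v (ez h') by apply: (he_H (h := h')); rewrite he_mem eqxx !orbT.
have Hz : polygon_pts v (ez h) by apply: (he_H (h := h)); rewrite he_mem eqxx !orbT.
have A := inH_half hconv (i1 n) Hz'; have B := inH_half hconv (i1 n) Hz.
have ss := sig_sq hconv.
set A' := oi v (i1 n) (ez h') in A; set B' := oi v (i1 n) (ez h) in B.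
have AB : 0 <= A' * B'.
  have -> : A' * B' = (sgm v * A') * (sgm v * B') by rewrite mulrACA ss mul1r.
  exact: mulr_ge0.
case/orP: exy N => /andP[/eqP-> /eqP->].
- rewrite hys !orient_mid2 -/A' -/B' => hN.
  have : 0 <= (s * s) * (A' * B') by apply: mulr_ge0 => //; apply: mulr_ge0.
  have -> : s * s * (A' * B') = s * A' * (s * B') by ring.
  by rewrite leNgt hN.
- rewrite hys !(orient_swap (v (i1 n))) !orient_mid2 -/A' -/B' => hN.
  have : 0 <= (s * s) * (A' * B') by apply: mulr_ge0 => //; apply: mulr_ge0.
  have -> : s * s * (A' * B') = - (s * A') * - (s * B') by ring.
  by rewrite leNgt hN.
Qed.


Lemma sum3 (H : 'I_3 -> R) : \sum_(k < 3) H k = H 0 + H 1 + H 2.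
Proof.
rewrite !big_ord_recl big_ord0 addr0 addrA.
by congr (H _ + H _ + H _); apply: val_inj.
Qed.

Lemma g_diag l : g l l = 0.
Proof. have := g_anti l l; lra. Qed.

Lemma g_cyc l0 l1 l2 : ~ [/\ l0 != l1, l0 != l2 & l1 != l2] ->
  g l0 l1 + g l1 l2 + g l2 l0 = 0.
Proof.
move=> hn.
case: (eqVneq l0 l1) => [<-|n01]; first by rewrite g_diag (g_anti l0 l2); ring.
case: (eqVneq l0 l2) => [<-|n02]; first by rewrite g_diag (g_anti l0 l1); ring.
case: (eqVneq l1 l2) => [<-|n12]; first by rewrite g_diag (g_anti l1 l0); ring.
by exfalso; apply: hn.
Qed.

Hypothesis hno : forall t, t \in T ->
  ~ [/\ lab t.1.1 != lab t.1.2, lab t.1.1 != lab t.2 & lab t.1.2 != lab t.2].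

Lemma tri_sum (i : 'I_(size TT)) : \sum_(k < 3) F (i, k) = 0.
Proof.
have ht : tr (i, 0) \in T := tr_T (i, 0).
set t := tr (i, 0) in ht.
have e k : F (i, k) = Num.sg (orient t.1.1 t.1.2 t.2) * G (ox t k) (oy t k).
  by rewrite /F /ex /ey /ez /= orient_k.
rewrite (eq_bigr _ (fun k _ => e k)) -mulr_sumr sum3.
rewrite /ox /oy ordS30 ordS31 ordS32 vt0 vt1 vt2 /G.
have := g_cyc (hno ht) => hg.
apply/eqP; rewrite mulf_eq0; apply/orP; right; apply/eqP.
by rewrite -[RHS]hg; ring.
Qed.

Lemma total_sum : \sum_(h : HE) F h = 0.
Proof.
rewrite (eq_bigr (fun h => F (h.1, h.2))); last by case.
rewrite -(pair_big xpredT xpredT (fun i k => F (i, k))) /=.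
by apply: big1 => i _; apply: tri_sum.
Qed.

Definition hasP (h : HE) : bool := [exists h', Pb h h'].

Definition iota (h : HE) : HE := if [pick h' | Pb h h'] is Some h' then h' else h.

Lemma iota_P h : hasP h -> Pb h (iota h).
Proof.
rewrite /iota; case: pickP => [h' //|hn] /existsP [h' hh].
by rewrite hn in hh.
Qed.

Lemma iota_nP h : ~~ hasP h -> iota h = h.
Proof.
rewrite /iota; case: pickP => [h' hh|//] hn.
by exfalso; move/negP: hn; apply; apply/existsP; exists h'.
Qed.

Lemma iotaK : cancel iota iota.
Proof.
move=> h; case: (boolP (hasP h)) => hp; last by rewrite !iota_nP.
have p1 := iota_P hp.
have p2 := P_sym p1.
have hp2 : hasP (iota h) by apply/existsP; exists h.
have p3 := iota_P hp2.
by apply: (P_uniq p3 p2).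
Qed.

Lemma hasP_iota h : hasP (iota h) = hasP h.
Proof.
case: (boolP (hasP h)) => hp; last by rewrite iota_nP // (negPf hp).
by apply/existsP; exists h; apply: P_sym; apply: iota_P.
Qed.

Lemma partner_sum : \sum_(h | hasP h) F h = 0.
Proof.
have e : \sum_(h | hasP h) F h = - \sum_(h | hasP h) F h.
  rewrite [LHS](reindex_inj (can_inj iotaK)) /= -sumrN.
  apply: eq_big => h; first by rewrite hasP_iota.
  by move=> hp; rewrite hasP_iota in hp; rewrite (F_anti (iota_P hp)).
lra.
Qed.

Lemma contra : False.
Proof.
have := total_sum; rewrite (bigID hasP) /= partner_sum add0r => hz.
have e : \sum_(h | ~~ hasP h) F h = sgm v * \sum_(h | ~~ hasP h) (Eb h)%:R.
  rewrite mulr_sumr; apply: eq_bigr => h hp; apply: F_bd => -[h' hh].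
  by move/negP: hp; apply; apply/existsP; exists h'.
case: LF => h0 [hn0 hE0].
have hp0 : ~~ hasP h0 by apply/negP => /existsP [h' hh]; apply: hn0; exists h'.
have pos : 0 < \sum_(h | ~~ hasP h) (Eb h)%:R :> R.
  rewrite (bigD1 h0) //= hE0 ltr_pwDl ?ltr01 //.
  by apply: sumr_ge0 => h _; apply: ler0n.
move: hz; rewrite e => /eqP; rewrite mulf_eq0 (negPf sgm_neq0) /=.
by rewrite gt_eqF.
Qed.

End Main.

End Aux.
Import Aux.

Theorem mainTheorem2 (R : realFieldType) (c : nat) (v : 'I_c -> 'rV[R]_2)
    (T : seq (triangle R)) (lab : 'rV[R]_2 -> 'I_c) :
  (3 <= c)%N ->
  convex_polygon v ->
  triangulation v T ->
  sperner_labelling v T lab ->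
  exists2 t, t \in T &
    [/\ lab t.1.1 != lab t.1.2, lab t.1.1 != lab t.2 & lab t.1.2 != lab t.2].
Proof.
case: c v lab => [|[|[|n]]] // v lab _ hconv htri hsp.
apply: NNPP => hn.
apply: (@contra R n v T lab hconv htri hsp).
by move=> t ht hl; apply: hn; exists t.
Qed.
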